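(* Let $K$ be a field, $S=K[x_1,\ldots,x_n]$, and let $I\subset S$ be a monomial ideal minimally generated by $q$ monomials $m_1,\ldots,m_q$. Label each vertex $\ell_{i,j}$ ($1\le i\le j\le q$) of the simplicial complex $\mathbb{M}_q^2$ by the monomial $m_im_j$. Then: (a) $\mathbb{M}_q^2$ supports a free resolution of $I^2$; (b) $\mathbb{M}^2(I)$ supports a free resolution of $I^2$.
   Context: Simplicial complexes: a simplicial complex on a vertex set is a collection of subsets closed under taking subsets; $\langle F_1,\ldots,F_r\rangle$ denotes the complex whose facets (maximal faces) are $F_1,\ldots,F_r$. Definition of $\mathbb{M}_q^2$: take the vertex set $V=\{\ell_{i,j}: 1\le i\le j\le q\}$, let $\mathcal{M}=\{\ell_{i,j}:1\le i<j\le q\}$ and $\mathcal{M}_i=\mathcal{M}\cup\{\ell_{i,i}\}$ for $i\in[q]$. Then $\mathbb{M}_q^2=\langle \mathcal{M}_1,\ldots,\mathcal{M}_q\rangle$. We write $\ell_{j,i}=\ell_{i,j}$. Definition of $\mathbb{M}^2(I)$: label each vertex $\ell_{i,j}$ of $\mathbb{M}_q^2$ with $m_im_j$. For any indices $i,j,u,v\in[q]$ with $\{i,j\}\ne\{u,v\}$ such that $m_im_j\mid m_um_v$: if $m_im_j=m_um_v$ and $i=\min\{i,j,u,v\}$, delete the vertex $\ell_{i,j}$; if $m_im_j\neq m_um_v$, delete the vertex $\ell_{u,v}$. $\mathbb{M}^2(I)$ is the induced subcomplex of $\mathbb{M}_q^2$ on the remaining vertices, with each face labeled by the lcm of the labels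 of its vertices. Supporting a free resolution: given a simplicial complex $\Delta$ whose vertices are labeled by monomials generating an ideal $J$, label each face $\tau$ by $m_\tau=\operatorname{lcm}$ of its vertex labels. $\Delta$ supports a free resolution of $J$ if the homogenization of the (augmented) simplicial chain complex of $\Delta$ with respect to these labels (in the sense of Bayer–Peeva–Sturmfels: the free module in homological degree $i$ has a basis indexed by the $i$-dimensional faces $\tau$, in multidegree $m_\tau$, with differential $\tau\mapsto\sum \pm (m_\tau/m_{\tau\setminus v})\,(\tau\setminus v)$) is a free resolution of $J$. *)

(* Defs.v *)
From HB Require Import structures.
From mathcomp Require Import all_boot all_order all_algebra.
From mathcomp Require Import mpoly.
Set Implicit Arguments. Unset Strict Implicit. Unset Printing Implicit Defensive.
Import GRing.Theory.
Local Open Scope ring_scope.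

(* A simplicial complex on a finite vertex type V is a predicate on {set V}
   (its faces); vertices are labeled by monomials, given as exponent vectors
   in 'X_{1..n}; the monomial itself is 'X_[m] in S = {mpoly K[n]}. *)

Section Complex.
Variables (K : fieldType) (n : nat) (V : finType).
Variables (Delta : pred {set V}) (lab : V -> 'X_{1..n}).

Definition face_lab (tau : {set V}) : 'X_{1..n} :=
  foldr (fun v acc => mlcm (lab v) acc) mnm0 (enum tau).

Definition face_sign (v : V) (tau : {set V}) : {mpoly K[n]} :=
  (-1) ^+ #|[set w in tau | (enum_rank w < enum_rank v)%N]|.

(* a k-chain of the homogenized complex: an element of the free S-module with
   basis the k-dimensional faces (#|tau| = k+1), written as its coefficient function *)
Definition is_chain (k : nat) (c : {ffun {set V} -> {mpoly K[n]}}) : Prop :=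
  forall tau, c tau != 0 -> (tau \in Delta) /\ #|tau| = k.+1.

(* homogenized boundary: tau |-> sum_v +- (m_tau / m_{tau \ v}) (tau \ v) *)
Definition bnd (c : {ffun {set V} -> {mpoly K[n]}}) : {ffun {set V} -> {mpoly K[n]}} :=
  [ffun sigma : {set V} => \sum_(v : V | v \notin sigma)
      face_sign v (v |: sigma)
      * 'X_[mnm_sub (face_lab (v |: sigma)) (face_lab sigma)]
      * c (v |: sigma)].

Definition augm (c : {ffun {set V} -> {mpoly K[n]}}) : {mpoly K[n]} :=
  \sum_(v : V) c [set v] * 'X_[lab v].

(* Delta supports a free resolution of the ideal J (given as a subset of S):
   the homogenized chain complex, augmented by augm onto J, is exact. *)
Definition supports_free_resolution (J : {mpoly K[n]} -> Prop) : Prop :=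
  (forall p, J p <-> exists c, is_chain 0 c /\ augm c = p)
  /\ (forall c, (is_chain 0 c /\ augm c = 0) <->
                (exists b, is_chain 1 b /\ bnd b = c))
  /\ (forall k c, (is_chain k.+1 c /\ bnd c = 0) <->
                  (exists b, is_chain k.+2 b /\ bnd b = c)).

End Complex.

(* vertices l_{i,j}, 1 <= i <= j <= q (0-indexed here) *)
Definition Vtx (q : nat) := {p : 'I_q * 'I_q | (p.1 <= p.2)%N}.

Definition vlab (n q : nat) (m : 'I_q -> 'X_{1..n}) (x : Vtx q) : 'X_{1..n} :=
  mnm_add (m (val x).1) (m (val x).2).

Definition Mfacet (q : nat) (i : 'I_q) : {set Vtx q} :=
  [set x : Vtx q | ((val x).1 < (val x).2)%N || (((val x).1 == i) && ((val x).2 == i))].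

Definition Mq2 (q : nat) : pred {set Vtx q} :=
  fun tau => [exists i : 'I_q, tau \subset Mfacet i].

Definition deleted (n q : nat) (m : 'I_q -> 'X_{1..n}) (x : Vtx q) : bool :=
  [exists i : 'I_q, exists j : 'I_q, exists u : 'I_q, exists v : 'I_q,
    [&& [set i; j] != [set u; v],
        lem (mnm_add (m i) (m j)) (mnm_add (m u) (m v)) &
        ([&& mnm_add (m i) (m j) == mnm_add (m u) (m v),
             (i <= j)%N, (i <= u)%N, (i <= v)%N &
             [set (val x).1; (val x).2] == [set i; j]]
         || ((mnm_add (m i) (m j) != mnm_add (m u) (m v))
             && ([set (val x).1; (val x).2] == [set u; v])))]].

Definition M2I (n q : nat) (m : 'I_q -> 'X_{1..n}) : pred {set Vtx q} :=
  fun tau => Mq2 tau && [forall x in tau, ~~ deleted m x].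

Definition ideal_sq (K : fieldType) (n q : nat) (m : 'I_q -> 'X_{1..n})
  (p : {mpoly K[n]}) : Prop :=
  exists a : 'I_q -> 'I_q -> {mpoly K[n]},
    p = \sum_(i < q) \sum_(j < q) a i j * 'X_[mnm_add (m i) (m j)].

Definition minimal_gens (n q : nat) (m : 'I_q -> 'X_{1..n}) : Prop :=
  forall i j : 'I_q, i != j -> ~~ lem (m i) (m j).

(* Main.v *)
Require Import Defs.
From HB Require Import structures.
From mathcomp Require Import all_boot all_order all_algebra.
From mathcomp Require Import mpoly.
From Stdlib Require Import Lia.
From mathcomp Require Import zify ring.
Set Implicit Arguments. Unset Strict Implicit. Unset Printing Implicit Defensive.
Import GRing.Theory.
Local Open Scope ring_scope.

Section Gen.
Variables (K : fieldType) (n : nat) (V : finType).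
Variables (Delta : pred {set V}) (lab : V -> 'X_{1..n}).

Local Notation fl := (face_lab lab).
Local Notation chain := {ffun {set V} -> {mpoly K[n]}}.

Lemma fl_le_seq (s : seq V) a :
  lem (foldr (fun v acc => mlcm (lab v) acc) mnm0 s) a = all (fun v => lem (lab v) a) s.
Proof.
elim: s => [|v s IH] /=; first by apply/mnm_lepP => i; rewrite mnm0E.
by rewrite lem_mlcm IH.
Qed.

Lemma fl_le (tau : {set V}) a : lem (fl tau) a = [forall v in tau, lem (lab v) a].
Proof.
rewrite /face_lab fl_le_seq; apply/allP/forall_inP => H v.
  by move=> vt; apply: H; rewrite mem_enum.
by rewrite mem_enum; apply: H.
Qed.

Lemma fl_mono (s t : {set V}) : s \subset t -> lem (fl s) (fl t).
Proof.
move=> st; rewrite fl_le; apply/forall_inP => v vs.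
have := lepm_refl (fl t); rewrite fl_le => /forall_inP; apply.
exact: (subsetP st).
Qed.

Lemma fl_set0 : fl set0 = mnm0.
Proof. by rewrite /face_lab enum_set0. Qed.

Lemma fl_set1 v : fl [set v] = lab v.
Proof. by rewrite /face_lab enum_set1 /= mlcm0. Qed.

Definition sg (v : V) (tau : {set V}) : K :=
  (-1) ^+ #|[set w in tau | (enum_rank w < enum_rank v)%N]|.

Lemma face_signE v tau : face_sign K n v tau = (sg v tau)%:MP.
Proof. by rewrite /face_sign /sg rmorphXn rmorphN1. Qed.

Lemma sgK v tau : sg v tau * sg v tau = 1.
Proof. by rewrite /sg -exprD -signr_odd oddD addbb. Qed.

Definition hat (c : chain) tau (a : 'X_{1..n}) : K :=
  if lem (fl tau) a then (c tau)@_(mnm_sub a (fl tau)) else 0.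

Lemma mcoeffMX0 (p : {mpoly K[n]}) g d : ~~ lem g d -> (p * 'X_[g])@_d = 0.
Proof.
move=> H; apply: memN_msupp_eq0; rewrite (perm_mem (msuppMX p g)).
apply/mapP => [[m' _ E]]; move: H; rewrite E; by rewrite lem_addr.
Qed.

Lemma hat_bnd (c : chain) (s : {set V}) a :
  hat (bnd lab c) s a = \sum_(v | v \notin s) sg v (v |: s) * hat c (v |: s) a.
Proof.
rewrite /hat /bnd ffunE; case: ifP => Hs.
  rewrite raddf_sum /=; apply: eq_bigr => v _.
  rewrite face_signE -mulrA [_ * c _]mulrC mcoeffCM; congr (_ * _).
  have Hvs := fl_mono (subsetUr [set v] s).
  case: ifP => Hvsa.
    have -> : mnm_sub a (fl s) = mnm_add (mnm_sub (fl (v |: s)) (fl s)) (mnm_sub a (fl (v |: s))).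
      apply/mnmP => i; rewrite !mnmE.
      move/mnm_lepP: Hvs => /(_ i); move/mnm_lepP: Hvsa => /(_ i); lia.
    by rewrite mcoeffMX.
  apply: mcoeffMX0; apply: contraFN Hvsa => /mnm_lepP H; apply/mnm_lepP => i.
  move: (H i); rewrite !mnmE; move/mnm_lepP: Hvs => /(_ i); move/mnm_lepP: Hs => /(_ i); lia.
rewrite big1 // => v _; case: ifP; rewrite ?mulr0 //.
by move=> H; rewrite (lepm_trans (fl_mono (subsetUr [set v] s)) H) in Hs.
Qed.

Lemma hat_inj (c d : chain) : (forall t a, hat c t a = hat d t a) -> c = d.
Proof.
move=> H; apply/ffunP => t; apply/mpolyP => b.
by have := H t (mnm_add b (fl t)); rewrite /hat lem_addl addmK.
Qed.

Lemma hat_nz (c : chain) t (P : bool) : (forall a, hat c t a != 0 -> P) -> c t != 0 -> P.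
Proof.
move=> H; apply: contraTT => nP; rewrite negbK; apply/eqP; apply/mpolyP => b; rewrite mcoeff0.
have := H (mnm_add b (fl t)); rewrite /hat lem_addl addmK.
by case: eqP => // _ /(_ isT) P'; move: nP; rewrite P'.
Qed.


Local Notation rk x := (@enum_rank V x).

Lemma sgU (x v : V) (t : {set V}) : x \notin t ->
  sg v (x |: t) = (-1) ^+ (rk x < rk v)%N * sg v t.
Proof.
move=> xt; rewrite /sg -exprD; congr (_ ^+ _).
case Px: (rk x < rk v)%N.
  have -> : [set w in x |: t | (rk w < rk v)%N] = x |: [set w in t | (rk w < rk v)%N].
    apply/setP => w; rewrite !inE; case: eqP => [->|] //=; by rewrite ?Px ?andbT ?andbF.
  by rewrite cardsU1 inE (negbTE xt).
have -> : [set w in x |: t | (rk w < rk v)%N] = [set w in t | (rk w < rk v)%N].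
  apply/setP => w; rewrite !inE; case: eqP => [->|] //=; by rewrite ?Px ?andbT ?andbF ?(negbTE xt).
by [].
Qed.

Lemma sgUself (v : V) (t : {set V}) : v \notin t -> sg v (v |: t) = sg v t.
Proof. by move=> vt; rewrite sgU // ltnn expr0 mul1r. Qed.

Lemma sign_flip (u v : V) : u != v ->
  (-1) ^+ (rk u < rk v)%N * (-1) ^+ (rk v < rk u)%N = - 1 :> K.
Proof.
move=> uv; case: (ltngtP (rk u) (rk v)) => H; rewrite ?expr0 ?expr1 ?mulr1 ?mul1r //.
by move: uv; rewrite -(inj_eq enum_rank_inj) -(inj_eq val_inj) /= H eqxx.
Qed.

Lemma sign_cone (v w : V) (s : {set V}) : v != w -> v \notin s -> w \in s ->
  sg v (v |: s) * sg w (v |: s) = - (sg w s * sg v (v |: (s :\ w))).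
Proof.
move=> vw vs ws.
have vs' : v \notin s :\ w by rewrite inE negb_and vs orbT.
have ws' : w \notin s :\ w by rewrite !inE eqxx.
rewrite sgUself // sgUself // sgU // -{1}(setD1K ws) sgU //.
rewrite mulrCA mulrA mulrA sign_flip 1?eq_sym //.
  by rewrite mulN1r mulNr mulrC.
by rewrite eq_sym.
Qed.

Lemma sign_dd (u v : V) (r : {set V}) : u != v -> u \notin r -> v \notin r ->
  sg v (v |: r) * sg u (u |: (v |: r)) = - (sg u (u |: r) * sg v (v |: (u |: r))).
Proof.
move=> uv ur vr.
have uvr : u \notin v |: r by rewrite !inE negb_or uv.
have vur : v \notin u |: r by rewrite !inE negb_or eq_sym uv.
rewrite !sgUself // sgU ?inE 1?eq_sym // sgU //.
have E : (-1) ^+ (rk v < rk u)%N = - (-1) ^+ (rk u < rk v)%N :> K.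
  have := sign_flip uv; set a := (-1) ^+ _; set b := (-1) ^+ _ => H.
  have aa : a * a = 1 by rewrite /a -exprD -signr_odd oddD addbb.
  by rewrite -[b]mul1r -aa -mulrA H mulrN1.
rewrite E; ring.
Qed.


Lemma hat0 t a : hat (0 : chain) t a = 0.
Proof. by rewrite /hat ffunE mcoeff0; case: ifP. Qed.

Definition pswap (p : V * V) := (p.2, p.1).
Lemma pswap_inj : injective pswap.
Proof. by case=> a b [c d] [-> ->]. Qed.

Lemma bnd_bnd (c : chain) : bnd lab (bnd lab c) = 0.
Proof.
apply: hat_inj => r a; rewrite hat0 hat_bnd.
under eq_bigr do rewrite hat_bnd mulr_sumr.
rewrite pair_big_dep /=.
set P := fun p : V * V => (p.1 \notin r) && (p.2 \notin p.1 |: r).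
set F := fun p : V * V => sg p.1 (p.1 |: r) *
   (sg p.2 (p.2 |: (p.1 |: r)) * hat c (p.2 |: (p.1 |: r)) a).
rewrite (bigID (fun p : V * V => (rk p.1 < rk p.2)%N)) /=.
rewrite [X in _ + X](reindex_inj pswap_inj) /=.
have HP p : P (pswap p) = P p.
  rewrite /P /pswap /= !inE !negb_or; case: eqP => [->|] /=; first by rewrite eqxx.
  by move/eqP; rewrite eq_sym => ->; rewrite andbC.
rewrite [X in _ + X](eq_bigl (fun p => P p && (rk p.1 < rk p.2)%N)); last first.
  move=> p; rewrite /P /pswap /= !inE !negb_or.
  case: (ltngtP (rk p.1) (rk p.2)) => H; rewrite ?andbT ?andbF //=.
  - by rewrite eq_sym; case: (p.1 \notin r); case: (p.2 \notin r); rewrite ?andbF.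
  - by rewrite -(inj_eq enum_rank_inj) -(inj_eq val_inj) /= H eqxx !andbF.
rewrite [X in _ + X](eq_bigr (fun p => - F p)); first by rewrite sumrN addrN.
case=> u v /andP [] /andP [] /= ur; rewrite !inE negb_or => /andP [vu vr] _.
rewrite /F /= mulrA sign_dd 1?eq_sym // mulNr -mulrA.
by rewrite setUCA.
Qed.


Lemma hat_nz2 (c : chain) (t : {set V}) a : hat c t a != 0 -> c t != 0 /\ lem (fl t) a.
Proof.
rewrite /hat; case: ifP => // H; rewrite ?eqxx //.
by move=> nz; split=> //; apply: contraNneq nz => ->; rewrite mcoeff0.
Qed.

Lemma augm_bnd (c : chain) : augm lab c = bnd lab c set0.
Proof.
rewrite /augm /bnd ffunE; apply: eq_big => [v|v _]; first by rewrite inE.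
rewrite setU0 face_signE fl_set1 fl_set0 subm0 mulrC; congr (_ * _).
rewrite (_ : sg v [set v] = 1) ?mul1r //.
rewrite /sg (_ : [set w in [set v] | _] = set0) ?cards0 ?expr0 //.
by apply/setP => w; rewrite !inE; case: eqP => // ->; rewrite ltnn.
Qed.

Hypothesis Hdown : forall s t : {set V}, s \subset t -> t \in Delta -> s \in Delta.

Lemma chain_bnd k (c : chain) : is_chain Delta k.+1 c -> is_chain Delta k (bnd lab c).
Proof.
move=> Hc s nz.
suff: (s \in Delta) && (#|s| == k.+1) by case/andP => -> /eqP.
apply: contraTT nz => Hn; rewrite negbK ffunE; apply/eqP; apply: big1 => v vs.
case: (eqVneq (c (v |: s)) 0) => [->|/Hc [HD Hcard]]; first by rewrite mulr0.
move: Hn; rewrite (Hdown (subsetUr _ _) HD) /=.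
by move: Hcard; rewrite cardsU1 vs /= add1n => -[->]; rewrite eqxx.
Qed.

Lemma chain0_bnd (c : chain) : is_chain Delta 0 c ->
  forall s, s != set0 -> bnd lab c s = 0.
Proof.
move=> Hc s s0; rewrite ffunE; apply: big1 => v vs.
case: (eqVneq (c (v |: s)) 0) => [->|/Hc [_ Hcard]]; first by rewrite mulr0.
move: Hcard; rewrite cardsU1 vs add1n => -[] /eqP; rewrite cards_eq0.
by rewrite (negbTE s0).
Qed.

Hypothesis Hcone : forall a (t0 : {set V}), t0 \in Delta -> t0 != set0 -> lem (fl t0) a ->
  exists w, lem (lab w) a /\ forall t, t \in Delta -> lem (fl t) a -> (w |: t) \in Delta.

Definition apexb a w := lem (lab w) a &&
  [forall t : {set V}, ((t \in Delta) && lem (fl t) a) ==> ((w |: t) \in Delta)].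
Definition apex a := [pick w | apexb a w].

Definition yh (c : chain) (t : {set V}) a :=
  if apex a is Some w then (if w \in t then sg w t * hat c (t :\ w) a else 0) else 0.

Definition Acand (c : chain) := undup (flatten
  [seq [seq mnm_add b (fl t) | b <- msupp (c t)] | t <- enum [set: {set V}]]).

Definition bcone (c : chain) : chain :=
  [ffun t => \sum_(a <- Acand c | lem (fl t) a) yh c t a *: 'X_[mnm_sub a (fl t)]].

Lemma Acand_mem (c : chain) (t : {set V}) a : hat c t a != 0 -> a \in Acand c.
Proof.
move=> /[dup] H /hat_nz2 [_ le]; rewrite mem_undup; apply/flattenP.
exists [seq mnm_add b (fl t) | b <- msupp (c t)]; first by apply/mapP; exists t; rewrite ?mem_enum ?inE.
apply/mapP; exists (mnm_sub a (fl t)); last by rewrite submK.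
by move: H; rewrite /hat le mcoeff_msupp.
Qed.

Lemma yh_nz (c : chain) (t : {set V}) a : yh c t a != 0 ->
  exists w, [/\ apex a = Some w, apexb a w, w \in t & hat c (t :\ w) a != 0].
Proof.
rewrite /yh; case E: (apex a) => [w|]; last by rewrite eqxx.
case: ifP => wt; last by rewrite eqxx.
move=> nz; exists w; split=> //; last by apply: contraNneq nz => ->; rewrite mulr0.
by move: E; rewrite /apex; case: pickP => // x Hx [<-].
Qed.

Lemma yh_supp (c : chain) (t : {set V}) a : yh c t a != 0 -> lem (fl t) a /\ a \in Acand c.
Proof.
move=> /yh_nz [w [_ /andP [lw _] wt nz]]; split; last first.
  by apply: Acand_mem nz.
have [_ le] := hat_nz2 nz; rewrite fl_le; apply/forall_inP => v vt.
case: (eqVneq v w) => [->//|vw].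
by move: le; rewrite fl_le => /forall_inP; apply; rewrite !inE vw.
Qed.

Lemma hat_bcone (c : chain) (t : {set V}) a : hat (bcone c) t a = yh c t a.
Proof.
case: (eqVneq (yh c t a) 0) => [E|nz]; last first.
  have [le aA] := yh_supp nz.
  rewrite /hat le /bcone ffunE raddf_sum /= big_mkcond (bigD1_seq a) ?undup_uniq //= le.
  rewrite mcoeffZ mcoeffX eqxx mulr1 big1 ?addr0 // => b ba.
  case: ifP => // le'.
  rewrite mcoeffZ mcoeffX; case: eqP; rewrite ?mulr0 // => E.
  by move: ba; rewrite -(submK le) -(submK le') E eqxx.
rewrite E /hat; case: ifP => // le.
rewrite /bcone ffunE raddf_sum /= big1_seq // => b /andP [le' bA].
rewrite mcoeffZ mcoeffX; case: eqP; rewrite ?mulr0 // => Eb.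
have -> : b = a by rewrite -(submK le) -(submK le') Eb.
by rewrite E mul0r.
Qed.


Lemma hat_nz3 (c : chain) (t : {set V}) a : hat c t a != 0 -> c t != 0.
Proof. by case/hat_nz2. Qed.

Lemma setD1U1 (v w : V) (s : {set V}) : v != w -> (v |: s) :\ w = v |: (s :\ w).
Proof.
move=> vw; apply/setP => x; rewrite !inE; case: (eqVneq x v) => [->|] //=.
by rewrite vw.
Qed.

Lemma bnd_bcone k (c : chain) : is_chain Delta k c -> bnd lab c = 0 ->
  bnd lab (bcone c) = c.
Proof.
move=> Hc Hb; apply: hat_inj => s a; rewrite hat_bnd.
under eq_bigr do rewrite hat_bcone.
have cyc (s' : {set V}) : \sum_(v | v \notin s') sg v (v |: s') * hat c (v |: s') a = 0.
  by rewrite -hat_bnd Hb hat0.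
rewrite /yh; case E: (apex a) => [w|]; last first.
  rewrite big1 => [|v _]; last by rewrite mulr0.
  apply/esym/eqP; apply: contraT => nz.
  have [/Hc [sD scard] le] := hat_nz2 nz.
  have s0 : s != set0 by rewrite -card_gt0 scard.
  have [w [lw Hw]] := Hcone sD s0 le.
  move: E; rewrite /apex; case: pickP => // /(_ w); rewrite /apexb lw /=.
  by move=> H _; rewrite -H; apply/forall_inP => t /andP [tD tl]; apply: Hw.
case: (boolP (w \in s)) => ws; last first.
  rewrite (bigD1 w) //= big1 => [|v /andP [vs vw]]; last first.
    by rewrite !inE eq_sym (negbTE vw) /= (negbTE ws) mulr0.
  by rewrite addr0 setU11 setU1K // mulrA sgK mul1r.
have := cyc (s :\ w); rewrite (bigD1 w) ?inE ?eqxx //= setD1K // => H.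
have H2 : \sum_(v | v \notin s) sg v (v |: (s :\ w)) * hat c (v |: (s :\ w)) a
    = - (sg w s * hat c s a).
  move/eqP: H; rewrite addrC addr_eq0 => /eqP <-.
  apply: eq_bigl => v; rewrite !inE negb_and negbK.
  by case: (eqVneq v w) => [->|]; rewrite ?ws //= andbT.
transitivity (- sg w s * \sum_(v | v \notin s) sg v (v |: (s :\ w)) * hat c (v |: (s :\ w)) a).
  rewrite mulr_sumr; apply: eq_bigr => v vs.
  have vw : v != w by apply: contraNneq vs => ->.
  rewrite !inE eq_sym (negbTE vw) ws /= setD1U1 // mulrA sign_cone //.
  by rewrite !mulNr mulrA.
by rewrite H2 mulNr mulrN opprK mulrA sgK mul1r.
Qed.

Lemma chain_bcone k (c : chain) : is_chain Delta k c -> is_chain Delta k.+1 (bcone c).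
Proof.
move=> Hc t nzt.
suff: (t \in Delta) && (#|t| == k.+2) by case/andP => -> /eqP.
apply: (@hat_nz (bcone c) t _ _ nzt) => a.
rewrite hat_bcone => /yh_nz [w [_ /andP [lw /forall_inP Hw] wt nz]].
have [/Hc [tD tcard] le] := hat_nz2 nz.
have := Hw _ (introT andP (conj tD le)); rewrite setD1K // => ->.
by rewrite (cardsD1 w t) wt tcard eqxx.
Qed.

Lemma exact_gen k (c : chain) : is_chain Delta k c -> bnd lab c = 0 ->
  exists b, is_chain Delta k.+1 b /\ bnd lab b = c.
Proof.
move=> Hc Hb; exists (bcone c); split; first exact: chain_bcone.
exact: (bnd_bcone Hc Hb).
Qed.

Lemma parts23 :
  (forall c : chain, (is_chain Delta 0 c /\ augm lab c = 0) <->
                (exists b, is_chain Delta 1 b /\ bnd lab b = c))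
  /\ (forall k (c : chain), (is_chain Delta k.+1 c /\ bnd lab c = 0) <->
                  (exists b, is_chain Delta k.+2 b /\ bnd lab b = c)).
Proof.
split.
  move=> c; split.
    case=> Hc Ha; apply: exact_gen => //; apply/ffunP => s; rewrite [RHS]ffunE.
    case: (eqVneq s set0) => [->|s0]; first by rewrite -augm_bnd.
    exact: chain0_bnd.
  case=> b [Hb <-]; split; first exact: chain_bnd.
  by rewrite augm_bnd bnd_bnd ffunE.
move=> k c; split; first by case=> Hc Hb; apply: exact_gen.
by case=> b [Hb <-]; split; [apply: chain_bnd | apply: bnd_bnd].
Qed.

End Gen.
Section Spec.
Variables (n q : nat) (m : 'I_q -> 'X_{1..n}).
Local Notation V := (Vtx q).
Variables (Delta : pred {set V}) (G : pred V).
Hypothesis HD : forall t, (t \in Delta) = Mq2 t && [forall x in t, G x].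

Lemma DG_down : forall s t : {set V}, s \subset t -> t \in Delta -> s \in Delta.
Proof.
move=> s t st; rewrite !HD => /andP [/existsP [i ti] /forall_inP Gt].
apply/andP; split; first by apply/existsP; exists i; apply: subset_trans ti.
by apply/forall_inP => x xs; apply: Gt; apply: (subsetP st).
Qed.

Lemma in_Mfacet (x : V) i : (x \in Mfacet i) = ((val x).1 < (val x).2)%N || (((val x).1 == i) && ((val x).2 == i)).
Proof. by rewrite inE. Qed.

Lemma diag_of (x : V) : ~~ ((val x).1 < (val x).2)%N -> (val x).1 = (val x).2.
Proof. by move=> H; apply/val_inj/eqP; rewrite eqn_leq (valP x) leqNgt H. Qed.

Hypothesis HP : forall a (u y : V), G u -> G y -> (val u).1 = (val u).2 -> (val y).1 = (val y).2 ->
  (val u).1 != (val y).1 -> lem (vlab m u) a -> lem (vlab m y) a ->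
  exists x, [/\ G x, ((val x).1 < (val x).2)%N & lem (vlab m x) a].

Lemma DG_cone : forall a (t0 : {set V}), t0 \in Delta -> t0 != set0 -> lem (face_lab (vlab m) t0) a ->
  exists w, lem (vlab m w) a /\ forall t, t \in Delta -> lem (face_lab (vlab m) t) a -> (w |: t) \in Delta.
Proof.
move=> a t0 t0D t00 t0a.
case: (boolP [exists x, [&& G x, ((val x).1 < (val x).2)%N & lem (vlab m x) a]]).
  case/existsP => x /and3P [Gx offx xa]; exists x; split => // t.
  rewrite !HD => /andP [/existsP [i ti] /forall_inP Gt] _; apply/andP; split.
    apply/existsP; exists i; rewrite subUset sub1set ti andbT in_Mfacet offx //.
  by apply/forall_inP => y; rewrite !inE => /orP [/eqP ->|/Gt].
move=> Hno.
have [u ut0] := set0Pn _ t00.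
move: t0D; rewrite HD => /andP [_ /forall_inP Gt0].
have Gu := Gt0 _ ut0.
have ua : lem (vlab m u) a by move: t0a; rewrite fl_le => /forall_inP; apply.
have offu : ~~ ((val u).1 < (val u).2)%N.
  by apply: contraNN Hno => H; apply/existsP; exists u; rewrite Gu H ua.
have du := diag_of offu.
exists u; split => // t; rewrite !HD => /andP [/existsP [j tj] /forall_inP Gt] ta.
apply/andP; split; last first.
  by apply/forall_inP => y; rewrite !inE => /orP [/eqP ->|/Gt].
apply/existsP; exists (val u).1; rewrite subUset sub1set in_Mfacet du eqxx /= orbT /=.
apply/subsetP => y yt; have := subsetP tj _ yt; rewrite !in_Mfacet => /orP [offy|/andP [/eqP y1 /eqP y2]].
  have ya : lem (vlab m y) a by move: ta; rewrite fl_le => /forall_inP; apply.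
  by move: Hno; rewrite negb_exists => /forallP /(_ y); rewrite Gt // offy ya.
rewrite y1 y2; case: (eqVneq j (val u).2) => [->|ju]; first by rewrite /= orbT.
have ya : lem (vlab m y) a by move: ta; rewrite fl_le => /forall_inP; apply.
have uy : (val u).1 != (val y).1 by rewrite y1 du eq_sym.
have [x [Gx offx xa]] := HP Gu (Gt _ yt) du (etrans y1 (esym y2)) uy ua ya.
by move: Hno; rewrite negb_exists => /forallP /(_ x); rewrite Gx offx xa.
Qed.


Hypothesis HQ : forall i j : 'I_q, exists z, G z /\ lem (vlab m z) (mnm_add (m i) (m j)).

Lemma single_in (z : V) : G z -> [set z] \in Delta.
Proof.
move=> Gz; rewrite HD; apply/andP; split; last by apply/forall_inP => x; rewrite inE => /eqP ->.
apply/existsP; exists (val z).1; rewrite sub1set in_Mfacet eqxx /=.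
by case: (boolP ((val z).1 < (val z).2)%N) => // /diag_of ->; rewrite eqxx.
Qed.

Variable K : fieldType.

Lemma DG_J (pp : {mpoly K[n]}) : ideal_sq m pp <->
  exists c, is_chain Delta 0 c /\ augm (vlab m) c = pp.
Proof.
split.
  case=> a ->.
  pose z i j := [pick z | G z && lem (vlab m z) (mnm_add (m i) (m j))].
  pose E i j : {ffun {set V} -> {mpoly K[n]}} := if z i j is Some w then
     [ffun t => if t == [set w] then a i j * 'X_[mnm_sub (mnm_add (m i) (m j)) (vlab m w)] else 0]
     else 0.
  exists (\sum_i \sum_j E i j); split.
    move=> t nzt.
    suff: (t \in Delta) && (#|t| == 1%N) by case/andP => -> /eqP.
    apply: contraTT nzt => Hn; rewrite negbK !sum_ffunE; apply/eqP.
    apply: big1 => i _; rewrite sum_ffunE; apply: big1 => j _.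
    rewrite /E /z; case: pickP => [w /andP [Gw _]|]; last by rewrite ffunE.
    rewrite ffunE; case: eqP => // tw; move: Hn; rewrite tw single_in // cards1 eqxx.
    by [].
  rewrite /augm; under eq_bigr do rewrite !sum_ffunE mulr_suml.
  rewrite exchange_big; apply: eq_bigr => i _.
  under eq_bigr do rewrite sum_ffunE mulr_suml.
  rewrite exchange_big; apply: eq_bigr => j _.
  rewrite /E /z; case: pickP => [w /andP [Gw le]|H]; last first.
    have [w [Gw le]] := HQ i j; by move: (H w); rewrite Gw le.
  rewrite (bigD1 w) //= big1 => [|v vw]; last first.
    by rewrite ffunE (inj_eq set1_inj) (negbTE vw) mul0r.
  by rewrite ffunE eqxx addr0 -mulrA -mpolyXD submK.
case=> c [Hc <-].
exists (fun i j => if @insub _ (fun p : 'I_q * 'I_q => (p.1 <= p.2)%N) V (i, j) is Some v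
   then c [set v] else 0).
rewrite pair_big /= (bigID (fun p : 'I_q * 'I_q => (p.1 <= p.2)%N)) /=.
rewrite [X in _ = _ + X]big1 ?addr0 => [|p /negbTE np]; last first.
  by rewrite insubF //= mul0r.
rewrite [RHS](@reindex_omap _ _ _ _ V val insub) => [|p pP]; last by rewrite insubT.
rewrite /augm; apply: eq_big => [v|v _]; first by rewrite (valP v) valK eqxx.
by rewrite -surjective_pairing valK.
Qed.

End Spec.
Section Final.
Variables (n q : nat) (m : 'I_q -> 'X_{1..n}).
Hypothesis Hmin : minimal_gens m.
Local Notation V := (Vtx q).

Lemma ord_vtx (i j : 'I_q) : exists x : V, val x = (i, j) \/ val x = (j, i).
Proof.
case: (leqP i j) => H; first by exists (Sub (i, j) H); left.
by exists (Sub (j, i) (ltnW H)); right.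
Qed.

Lemma vlab_ord (x : V) i j : val x = (i, j) \/ val x = (j, i) -> vlab m x = mnm_add (m i) (m j).
Proof. by rewrite /vlab; case=> ->; rewrite // addmC. Qed.

Lemma lem_sq (a b c : 'X_{1..n}) : lem (mnm_add a a) c -> lem (mnm_add b b) c -> lem (mnm_add a b) c.
Proof.
move=> /mnm_lepP H1 /mnm_lepP H2; apply/mnm_lepP => k.
move: (H1 k) (H2 k); rewrite !mnmDE; lia.
Qed.

Lemma off_ord (x : V) (i j : 'I_q) : i != j -> val x = (i, j) \/ val x = (j, i) ->
  ((val x).1 < (val x).2)%N.
Proof.
move=> ij Hx; rewrite ltn_neqAle (valP x) andbT.
by case: Hx => -> /=; rewrite (inj_eq val_inj) // eq_sym.
Qed.

Lemma HP_all : forall a (u y : V), predT u -> predT y -> (val u).1 = (val u).2 -> (val y).1 = (val y).2 ->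
  (val u).1 != (val y).1 -> lem (vlab m u) a -> lem (vlab m y) a ->
  exists x : V, [/\ predT x, ((val x).1 < (val x).2)%N & lem (vlab m x) a].
Proof.
move=> a u y _ _ du dy uy ua ya.
have [x Hx] := ord_vtx (val u).1 (val y).1.
exists x; split => //; first exact: off_ord uy Hx.
rewrite (vlab_ord Hx); apply: lem_sq.
  by move: ua; rewrite /vlab -du.
by move: ya; rewrite /vlab -dy.
Qed.

Lemma HQ_all : forall i j : 'I_q, exists z : V, predT z /\ lem (vlab m z) (mnm_add (m i) (m j)).
Proof.
move=> i j; have [x Hx] := ord_vtx i j; exists x; split => //.
by rewrite (vlab_ord Hx) lepm_refl.
Qed.

End Final.

Theorem theorem1a (K : fieldType) (n q : nat) (m : 'I_q -> 'X_{1..n}) :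
  minimal_gens m ->
  supports_free_resolution (Mq2 (q:=q)) (vlab m) (@ideal_sq K n q m).
Proof.
move=> Hmin.
have HD : forall t, (t \in Mq2 (q:=q)) = Mq2 t && [forall x in t, predT x].
  by move=> t; rewrite [X in _ && X](_ : _ = true) ?andbT //; apply/forall_inP.
split; first by move=> p; apply: (DG_J HD (HQ_all m)).
apply: parts23; first exact: DG_down HD.
move=> a t0; exact: (DG_cone HD (@HP_all n q m)). 
Qed.
Section M2.
Variables (n q : nat) (m : 'I_q -> 'X_{1..n}).
Hypothesis Hmin : minimal_gens m.
Local Notation V := (Vtx q).

Lemma gens_inj (i j : 'I_q) : m i = m j -> i = j.
Proof.
move=> E; apply/eqP; apply: contraT => ij; have := Hmin ij.
by rewrite E lepm_refl.
Qed.

Lemma set2_cases (a b c d : 'I_q) : [set a; b] = [set c; d] ->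
  (a = c /\ b = d) \/ (a = d /\ b = c).
Proof.
move=> E.
have mem x : (x \in [set a; b]) = (x \in [set c; d]) by rewrite E.
have /set2P Ha : a \in [set c; d] by rewrite -mem set21.
have /set2P Hb : b \in [set c; d] by rewrite -mem set22.
have /set2P Hc : c \in [set a; b] by rewrite mem set21.
have /set2P Hd : d \in [set a; b] by rewrite mem set22.
case: Ha => ?; case: Hb => ?; case: Hc => ?; case: Hd => ?; subst;
  by [left; split | right; split].
Qed.

Lemma set2_eq (a b c d : 'I_q) : [set a; b] = [set c; d] ->
  mnm_add (m a) (m b) = mnm_add (m c) (m d).
Proof. by case/set2_cases => [[-> ->]|[-> ->]] //; rewrite addmC. Qed.

Lemma set2_min (a b c d : 'I_q) : (a <= b)%N -> (c <= d)%N -> [set a; b] = [set c; d] -> a = c.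
Proof.
move=> ab cd E.
have mem x : (x \in [set a; b]) = (x \in [set c; d]) by rewrite E.
move: (mem a) (mem c); rewrite !inE !eqxx /= ?orbT => /esym /orP Ha /orP Hc.
apply/val_inj/eqP; rewrite eqn_leq; apply/andP; split.
  by case: Hc => /eqP ->.
by case: Ha => /eqP ->.
Qed.


Lemma desc (x0 : V) : exists z : V, ~~ deleted m z /\ lem (vlab m z) (vlab m x0).
Proof.
pose mu (x : V) := (mdeg (vlab m x) * q.+1 + (q - (val x).1))%N.
suff H : forall N (x : V), (mu x < N)%N -> exists z : V, ~~ deleted m z /\ lem (vlab m z) (vlab m x).
  exact: (H (mu x0).+1).
elim=> // N IH x mux; have {}mux : (mu x <= N)%N := mux.
case: (boolP (deleted m x)) => [del|nd]; last by exists x; rewrite nd lepm_refl.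
move: del => /existsP [i /existsP [j /existsP [u /existsP [v /and3P [neq le]]]]].
case/orP => [/and5P [/eqP eq ij iu iv /eqP sx] | /andP [ne /eqP sx]].
  have [y Hy] := ord_vtx u v.
  have ly := vlab_ord m Hy.
  have lx : vlab m x = mnm_add (m i) (m j) by apply: set2_eq.
  have x1 : (val x).1 = i by apply: set2_min sx => //; exact: (valP x).
  have ui : u != i.
    apply: contraNneq neq => Eu; subst u.
    have Ej : m j = m v by apply: (@addmI _ (m i)).
    by rewrite (gens_inj Ej).
  have vi : v != i.
    apply: contraNneq neq => Ev; subst v.
    have Ej : m j = m u by apply: (@addmI _ (m i)); rewrite eq addmC.
    by rewrite (gens_inj Ej) setUC.
  have y1 : (i < (val y).1)%N.
    rewrite ltn_neqAle; case: Hy => -> /=.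
      by rewrite iu andbT eq_sym (inj_eq val_inj).
    by rewrite iv andbT eq_sym (inj_eq val_inj).
  have lt : (mu y < mu x)%N.
    rewrite /mu ly -eq -lx x1.
    have := ltn_ord (val y).1; lia.
  have [z [nz lz]] := IH y (leq_trans lt mux).
  by exists z; split => //; rewrite lx eq -ly.
have [y Hy] := ord_vtx i j.
have ly := vlab_ord m Hy.
have lx : vlab m x = mnm_add (m u) (m v) by apply: set2_eq.
have ltd : (mdeg (vlab m y) < mdeg (vlab m x))%N.
  have E1 : mdeg (vlab m x) = (mdeg (mnm_sub (mnm_add (m u) (m v)) (mnm_add (m i) (m j)))
     + mdeg (vlab m y))%N by rewrite ly lx -mdegD submK.
  have : (0 < mdeg (mnm_sub (mnm_add (m u) (m v)) (mnm_add (m i) (m j))))%N.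
    rewrite lt0n mdeg_eq0; apply: contra ne => /eqP E0.
    by rewrite -(submK le) E0 add0m.
  lia.
have lt : (mu y < mu x)%N by rewrite /mu; nia.
have [z [nz lz]] := IH y (leq_trans lt mux).
by exists z; split => //; apply: lepm_trans lz _; rewrite ly lx.
Qed.

End M2.
Lemma natL1 (a b c : nat) : (a + a <= b + c)%N -> a = b -> (b <= c)%N.
Proof. move=> H E; subst; lia. Qed.
Lemma natL2 (a b c : nat) : (a + a <= b + c)%N -> (2 * (a - b) <= c - b)%N.
Proof. lia. Qed.
Lemma natL3 (b c : nat) : (c - b == 0)%N -> (c <= b)%N.
Proof. move=> /eqP; lia. Qed.
Lemma natL4 (x y N : nat) : (2 * x <= y)%N -> (0 < y)%N -> (y <= N)%N -> (x < N)%N.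
Proof. lia. Qed.

Section M2b.
Variables (n q : nat) (m : 'I_q -> 'X_{1..n}).
Hypothesis Hmin : minimal_gens m.
Local Notation V := (Vtx q).

Lemma HQ_M2 : forall i j : 'I_q, exists z : V, ~~ deleted m z /\ lem (vlab m z) (mnm_add (m i) (m j)).
Proof.
move=> i j; have [x Hx] := ord_vtx i j; have [z [nz lz]] := desc Hmin x.
by exists z; split => //; rewrite -(vlab_ord m Hx).
Qed.

Lemma HP_M2 : forall a (u y : V), ~~ deleted m u -> ~~ deleted m y ->
  (val u).1 = (val u).2 -> (val y).1 = (val y).2 ->
  (val u).1 != (val y).1 -> lem (vlab m u) a -> lem (vlab m y) a ->
  exists x : V, [/\ ~~ deleted m x, ((val x).1 < (val x).2)%N & lem (vlab m x) a].
Proof.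
move=> a u y Gu Gy du dy uy ua ya.
case: (boolP [exists x : V, [&& ~~ deleted m x, ((val x).1 < (val x).2)%N & lem (vlab m x) a]]).
  by case/existsP => x /and3P [? ? ?]; exists x.
move=> Hno; exfalso.
set i := (val u).1.
have ia : lem (mnm_add (m i) (m i)) a by move: ua; rewrite /vlab -du.
pose f (k : 'I_q) := (\sum_(c < n) (m k c - m i c))%N.
suff H : forall N (y : V), (f (val y).1 < N)%N -> ~~ deleted m y -> (val y).1 = (val y).2 ->
    (val y).1 != i -> lem (vlab m y) a -> False.
  by apply: (H _ y (ltnSn _) Gy dy _ ya); rewrite eq_sym.
elim=> // N IH y' fy Gy' dy' yi y'a.
have {}fy : (f (val y').1 <= N)%N := fy.
set k0 := (val y').1.
have k0a : lem (mnm_add (m k0) (m k0)) a by move: y'a; rewrite /vlab -dy'.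
have [x Hx] := ord_vtx i k0.
have xa : lem (vlab m x) a by rewrite (vlab_ord m Hx); apply: lem_sq.
have [z [nz lz]] := desc Hmin x.
have za := lepm_trans lz xa.
case: (boolP ((val z).1 < (val z).2)%N) => offz.
  by move: Hno; rewrite negb_exists => /forallP /(_ z); rewrite nz offz za.
have dz : (val z).1 = (val z).2.
  by apply/val_inj/eqP; rewrite eqn_leq (valP z) leqNgt offz.
set k := (val z).1.
have lz' : lem (mnm_add (m k) (m k)) (mnm_add (m i) (m k0)).
  by move: lz; rewrite (vlab_ord m Hx) /vlab -dz.
have ki : k != i.
  have ik0 : i != k0 by rewrite eq_sym.
  apply/eqP => Eki; have := Hmin ik0.
  apply/negP/negPn; apply/mnm_lepP => c.
  move/mnm_lepP: lz' => /(_ c); rewrite !mnmDE Eki => H; exact: (natL1 H).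
have f2 : (2 * f k <= f k0)%N.
  rewrite /f big_distrr /=; apply: leq_sum => c _.
  move/mnm_lepP: lz' => /(_ c); rewrite !mnmDE; exact: natL2.
have f0 : (0 < f k0)%N.
  rewrite lt0n; apply/negP => /eqP F0.
  have := Hmin yi; apply/negP/negPn; apply/mnm_lepP => c.
  have : (m k0 c - m i c == 0)%N.
    by move: F0 => /eqP; rewrite sum_nat_eq0 => /forallP /(_ c).
  exact: natL3.
apply: (IH z) => //; exact: natL4 f2 f0 fy.
Qed.

End M2b.

Theorem theorem1b (K : fieldType) (n q : nat) (m : 'I_q -> 'X_{1..n}) :
  minimal_gens m ->
  supports_free_resolution (M2I m) (vlab m) (@ideal_sq K n q m).
Proof.
move=> Hmin.
have HD : forall t, (t \in M2I m) = Mq2 t && [forall x in t, ~~ deleted m x] by [].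
split; first by move=> p; apply: (DG_J HD (HQ_M2 Hmin)).
apply: parts23; first exact: DG_down HD.
move=> a t0; exact: (DG_cone HD (HP_M2 Hmin)).
Qed.

Local Close Scope ring_scope.

Theorem theorem1 (K : fieldType) (n q : nat) (m : 'I_q -> 'X_{1..n}) :
  minimal_gens m ->
  supports_free_resolution (Mq2 (q:=q)) (vlab m) (@ideal_sq K n q m)
  /\ supports_free_resolution (M2I m) (vlab m) (@ideal_sq K n q m).
Proof.
move=> Hmin; split; [exact: theorem1a | exact: theorem1b].
Qed.
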